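(* In the safe linear bandit setting with ROFUL as described in the context (with all its standing assumptions), on the event $\mathcal{E}_{\mathrm{conf}}$, for all $t\in[T]$, $$\theta^\top(\tilde x_t-x_t)\le S_\theta\frac{2\beta_t}{b}\|x_t\|_{V_t^{-1}}.$$
   Context: Safe linear bandit setting: at round $t$ the learner plays $x_t$ in a closed set $\mathcal{X}\subseteq\mathbb{R}^d$ and observes $y_t=\theta^\top x_t+\epsilon_t$, $z_t=a^\top x_t+\eta_t$, with $\theta,a$ unknown and $b>0$ known; $\mathcal{Y}=\{x\in\mathcal{X}:a^\top x\le b\}$, $x_*\in\arg\max_{\mathcal{Y}}\theta^\top x$. Standing assumptions: $\mathcal{X}$ star-convex w.r.t. the origin, $\|x\|\le1$ on $\mathcal{X}$, $\theta^\top x_*>0$; $\|a\|\le S_a$, $\|\theta\|\le S_\theta$, $S=\max(S_a,S_\theta)$, $\nu=b/S_a\le1$. Parameters $\rho>0$, $\delta\in(0,1)$, $\lambda\ge1$. ROFUL: $V_t=\lambda I+\sum_{k<t}x_kx_k^\top$, $\hat a_t=V_t^{-1}\sum_{k<t}x_kz_k$, $\hat\theta_t=V_t^{-1}\sum_{k<t}x_ky_k$, $\beta_t=\rho\sqrt{d\log\left(\frac{1+(t-1)/\lambda}{\delta/2}\right)}+\sqrt\lambda S$, $\|x\|_M=\sqrt{x^\top Mx}$; $\mathcal{Y}_t^p=\{x\in\mathcal{X}:\hat a_t^\top x+\beta_t\|x\|_{V_t^{-1}}\le b\}$, $\mathcal{Y}_t^o=\{x\in\mathcal{X}:\hat a_t^\top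 x-\beta_t\|x\|_{V_t^{-1}}\le b\}$; $\tilde x_t\in\arg\max_{x\in\mathcal{Y}_t^o}(\hat\theta_t^\top x+\beta_t\|x\|_{V_t^{-1}})$; $\gamma_t=\max(\min(\nu/\|\tilde x_t\|,1),\max\{\mu\in[0,1]:\mu\tilde x_t\in\mathcal{Y}_t^p\})$; play $x_t=\gamma_t\tilde x_t$. $\mathcal{E}_{\mathrm{conf}}$: the event that $|x^\top(\hat\theta_t-\theta)|\le\beta_t\|x\|_{V_t^{-1}}$ and $|x^\top(\hat a_t-a)|\le\beta_t\|x\|_{V_t^{-1}}$ for all $x\in\mathcal{X}$ and all $t\ge1$. *)

(* Defs.v *)
From HB Require Import structures.
From mathcomp Require Import all_boot all_order all_algebra.
From mathcomp Require Import all_classical all_reals all_analysis.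
Set Implicit Arguments. Unset Strict Implicit. Unset Printing Implicit Defensive.
Import Order.TTheory GRing.Theory Num.Theory.
Import numFieldNormedType.Exports.
Local Open Scope classical_set_scope.
Local Open Scope ring_scope.

Section SafeBandit.
Variables (R : realType) (d : nat).

Definition dot (u v : 'cV[R]_d) : R := (u^T *m v) 0 0.
Definition enorm (v : 'cV[R]_d) : R := Num.sqrt (dot v v).
Definition normM (M : 'M[R]_d) (v : 'cV[R]_d) : R := Num.sqrt ((v^T *m M *m v) 0 0).

(* Rounds are indexed t = 1, 2, ...; the history before round t is k = 1..t-1. *)
Definition Vt (lam : R) (x : nat -> 'cV[R]_d) (t : nat) : 'M[R]_d :=
  lam%:M + \sum_(1 <= k < t) (x k *m (x k)^T).

Definition lsest (lam : R) (x : nat -> 'cV[R]_d) (o : nat -> R) (t : nat) : 'cV[R]_d :=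
  invmx (Vt lam x t) *m \sum_(1 <= k < t) (o k *: x k).

Definition betat (rho delta lam S : R) (t : nat) : R :=
  rho * Num.sqrt (d%:R * ln ((1 + (t - 1)%:R / lam) / (delta / 2))) + Num.sqrt lam * S.

Definition Ysafe (X : set 'cV[R]_d) (a : 'cV[R]_d) (b : R) : set 'cV[R]_d :=
  [set v | X v /\ dot a v <= b].

Definition Yp (X : set 'cV[R]_d) (ahat : 'cV[R]_d) (beta : R) (Vinv : 'M[R]_d) (b : R)
  : set 'cV[R]_d :=
  [set v | X v /\ dot ahat v + beta * normM Vinv v <= b].

Definition Yo (X : set 'cV[R]_d) (ahat : 'cV[R]_d) (beta : R) (Vinv : 'M[R]_d) (b : R)
  : set 'cV[R]_d :=
  [set v | X v /\ dot ahat v - beta * normM Vinv v <= b].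

(* gamma_t = max(min(nu/||xt||, 1), max{mu in [0,1] : mu xt in Y^p_t});
   convention nu/0 = +oo, i.e. min(nu/||xt||,1) = 1 when xt = 0.
   The inner max is written as a sup (the set is closed, contains 0, bounded by 1). *)
Definition gammat (nu : R) (Ypt : set 'cV[R]_d) (xt : 'cV[R]_d) : R :=
  Num.max (if enorm xt == 0 then 1 else Num.min (nu / enorm xt) 1)
          (sup [set mu : R | 0 <= mu <= 1 /\ Ypt (mu *: xt)]).

(* One round t of ROFUL, given the whole trajectory x (played actions),
   y, z (observations) and xt (the optimistic actions tilde x_t). *)
Definition roful_round (X : set 'cV[R]_d) (b Sa rho delta lam S : R)
  (x xt : nat -> 'cV[R]_d) (y z : nat -> R) (t : nat) : Prop :=
  let Vinv := invmx (Vt lam x t) in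
  let bt := betat rho delta lam S t in
  let ah := lsest lam x z t in
  let th := lsest lam x y t in
  [/\ Yo X ah bt Vinv b (xt t),
      (forall v, Yo X ah bt Vinv b v ->
         dot th v + bt * normM Vinv v <= dot th (xt t) + bt * normM Vinv (xt t)) &
      x t = gammat (b / Sa) (Yp X ah bt Vinv b) (xt t) *: xt t].

Definition E_conf (X : set 'cV[R]_d) (theta a : 'cV[R]_d) (rho delta lam S : R)
  (x : nat -> 'cV[R]_d) (y z : nat -> R) : Prop :=
  forall t : nat, (1 <= t)%N -> forall v, X v ->
    `|dot v (lsest lam x y t - theta)| <= betat rho delta lam S t * normM (invmx (Vt lam x t)) v
    /\ `|dot v (lsest lam x z t - a)| <= betat rho delta lam S t * normM (invmx (Vt lam x t)) v.

End SafeBandit.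

(* Main.v *)
Require Import Defs.
From HB Require Import structures.
From mathcomp Require Import all_boot all_order all_algebra.
From mathcomp Require Import all_classical all_reals all_analysis.
From mathcomp Require Import ring lra.
Import Order.TTheory GRing.Theory Num.Theory.
Import numFieldNormedType.Exports.
Local Open Scope classical_set_scope.
Local Open Scope ring_scope.

Section H.
Variables (R : realType) (d : nat).
Implicit Types u v w : 'cV[R]_d.

Lemma dotE u v : dot u v = \sum_i u i 0 * v i 0.
Proof. by rewrite /dot !mxE; apply: eq_bigr => i _; rewrite mxE. Qed.

Lemma dotC u v : dot u v = dot v u.
Proof. by rewrite !dotE; apply: eq_bigr => i _; rewrite mulrC. Qed.

Lemma dotDr u v w : dot u (v + w) = dot u v + dot u w.
Proof. by rewrite /dot mulmxDr mxE. Qed.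

Lemma dotZr u v (s : R) : dot u (s *: v) = s * dot u v.
Proof. by rewrite /dot -scalemxAr mxE. Qed.

Lemma dotNr u v : dot u (- v) = - dot u v.
Proof. by rewrite -scaleN1r dotZr mulN1r. Qed.

Lemma dotBr u v w : dot u (v - w) = dot u v - dot u w.
Proof. by rewrite dotDr dotNr. Qed.

Lemma dotDl u v w : dot (v + w) u = dot v u + dot w u.
Proof. by rewrite dotC dotDr !(dotC u). Qed.
Lemma dotZl u v (s : R) : dot (s *: v) u = s * dot v u.
Proof. by rewrite dotC dotZr dotC. Qed.
Lemma dotBl u v w : dot (v - w) u = dot v u - dot w u.
Proof. by rewrite dotC dotBr !(dotC u). Qed.

Lemma dot_ge0 u : 0 <= dot u u.
Proof. by rewrite dotE; apply: sumr_ge0 => i _; rewrite -expr2 sqr_ge0. Qed.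

Lemma cs u v : dot u v <= enorm u * enorm v.
Proof.
set A := dot u u; set B := dot v v; set C := dot u v.
have key : forall s : R, 0 <= A - 2 * s * C + s ^+ 2 * B.
  move=> s; have := dot_ge0 (u - s *: v).
  rewrite !dotBl !dotBr !dotZl !dotZr (dotC v u) -/A -/B -/C.
  suff -> : A - 2 * s * C + s ^+ 2 * B = A - s * C - (s * C - s * (s * B)) by [].
  by ring.
have C2 : C ^+ 2 <= A * B.
  have hB := dot_ge0 v; rewrite -/B in hB.
  case: (ltrgtP B 0) hB => // [Bpos|B0] _.
    have := key (C / B).
    move=> h. have h2 : 0 <= B * (A - 2 * (C / B) * C + (C / B) ^+ 2 * B) by apply: mulr_ge0 => //; apply ltW.
    have e : B * (A - 2 * (C / B) * C + (C / B) ^+ 2 * B) = A * B - C ^+ 2.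
      by field; rewrite gt_eqF.
    rewrite e in h2.
    by rewrite -subr_ge0.
  have hA := dot_ge0 u; rewrite -/A in hA.
  have [->|C0] := eqVneq C 0; first by rewrite expr0n /= mulr_ge0 // B0.
  have := key ((A + 1) / 2 / C).
  have -> : A - 2 * ((A + 1) / 2 / C) * C + ((A + 1) / 2 / C) ^+ 2 * B = -1.
    by rewrite B0; field.
  by rewrite lerNr oppr0 ler10.
rewrite /enorm -/A -/B -sqrtrM ?dot_ge0 //.
apply: le_trans (ler_norm C) _.
by rewrite -sqrtr_sqr ler_sqrt // ?mulr_ge0 ?dot_ge0.
Qed.

Lemma normMZ (M : 'M[R]_d) v (g : R) : 0 <= g -> normM M (g *: v) = g * normM M v.
Proof.
move=> g0; rewrite /normM.
have -> : ((g *: v)^T *m M *m (g *: v)) 0 0 = g ^+ 2 * (v^T *m M *m v) 0 0.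
  have -> : (g *: v)^T = g *: v^T by apply/matrixP => i j; rewrite !mxE.
  by rewrite -!scalemxAl -scalemxAr !mxE mulrA -expr2.
by rewrite sqrtrM ?sqr_ge0 // sqrtr_sqr ger0_norm.
Qed.
End H.


Theorem lemma5 (R : realType) (d : nat) (X : set 'cV[R]_d) (theta a : 'cV[R]_d)
  (b Sa Sth rho delta lam : R) (x_star : 'cV[R]_d)
  (x xt : nat -> 'cV[R]_d) (y z eps eta : nat -> R) (T : nat) :
  closed X ->
  (forall v, X v -> forall mu : R, 0 <= mu <= 1 -> X (mu *: v)) ->
  (forall v, X v -> enorm v <= 1) ->
  0 < b -> 0 < Sa -> enorm a <= Sa -> enorm theta <= Sth -> b / Sa <= 1 ->
  0 < rho -> 0 < delta < 1 -> 1 <= lam ->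
  Ysafe X a b x_star ->
  (forall v, Ysafe X a b v -> dot theta v <= dot theta x_star) ->
  0 < dot theta x_star ->
  (forall k, y k = dot theta (x k) + eps k) ->
  (forall k, z k = dot a (x k) + eta k) ->
  (forall t, (1 <= t)%N -> roful_round X b Sa rho delta lam (Num.max Sa Sth) x xt y z t) ->
  E_conf X theta a rho delta lam (Num.max Sa Sth) x y z ->
  forall t : nat, (1 <= t <= T)%N ->
    dot theta (xt t - x t)
      <= Sth * (2 * betat d rho delta lam (Num.max Sa Sth) t / b)
             * normM (invmx (Vt lam x t)) (x t).
Proof.
move=> _ star Xn b0 Sa0 _ hth _ rho0 _ _ _ _ _ _ _ Hr _ t /andP[t1 _].
have [[Xxv hYo] hmax hx] := Hr t t1.
move: hYo hmax hx.
set Vinv := invmx (Vt lam x t).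
set bt := betat d rho delta lam (Num.max Sa Sth) t.
set ah := lsest lam x z t.
set xv := xt t.
set n := normM Vinv xv.
move=> hYo _ hx.
have bt0 : 0 <= bt.
  rewrite /bt /betat; apply: addr_ge0; apply: mulr_ge0; rewrite ?sqrtr_ge0 ?ltW //.
  by rewrite lt_max Sa0.
have n0 : 0 <= n by rewrite /n /normM sqrtr_ge0.
set S := [set mu : R | 0 <= mu <= 1 /\ Yp X ah bt Vinv b (mu *: xv)].
have den0 : 0 < b + 2 * bt * n.
  by rewrite ltr_wpDr // !mulr_ge0.
set mu0 := b / (b + 2 * bt * n).
have mu0e : mu0 * (b + 2 * bt * n) = b by rewrite /mu0 mulfVK // gt_eqF.
have mu00 : 0 <= mu0 by rewrite /mu0 divr_ge0 // ltW.
have mu01 : mu0 <= 1.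
  rewrite /mu0 ler_pdivrMr // mul1r lerDl; by rewrite mulr_ge0 // mulr_ge0.
have Smu0 : S mu0.
  split; first by rewrite mu00 mu01.
  split; first by apply: star => //; rewrite mu00 mu01.
  rewrite dotZr normMZ // -/n.
  have hh : dot ah xv + bt * n <= b + 2 * bt * n by move: hYo; rewrite -/n => hYo; lra.
  rewrite -[leRHS]mu0e.
  suff -> : mu0 * dot ah xv + bt * (mu0 * n) = mu0 * (dot ah xv + bt * n) by rewrite ler_wpM2l.
  by ring.
have hub : has_ubound S by exists 1 => m [/andP[_ ?] _].
have supge : mu0 <= sup S by apply: ub_le_sup.
have suple : sup S <= 1.
  apply: ge_sup; first by exists mu0.
  by move=> m [/andP[_ ?] _].
move: hx; set g := gammat _ _ _ => hx.
have gge : sup S <= g by rewrite /g /gammat le_max lexx orbT.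
have gle : g <= 1.
  rewrite /g /gammat ge_max suple andbT.
  by case: ifP => _ //; rewrite ge_min lexx orbT.
have g0 : 0 <= g by apply: le_trans mu00 (le_trans supge gge).
have key : b <= g * (b + 2 * bt * n).
  rewrite -[leLHS]mu0e; apply: ler_wpM2r; first exact: ltW.
  exact: le_trans supge gge.
rewrite hx dotBr dotZr normMZ // -/n.
have Sth0 : 0 <= Sth by apply: le_trans hth; rewrite /enorm sqrtr_ge0.
have CS : dot theta xv <= Sth.
  apply: (le_trans (@cs _ _ theta xv)).
  rewrite -[leRHS]mulr1; apply: ler_pM => //; rewrite /enorm ?sqrtr_ge0 //.
  exact: Xn.
set C := dot theta xv in CS *.
have e : Sth * (2 * bt / b) * (g * n) = (Sth * (2 * bt * g * n)) / b.
  by field; rewrite gt_eqF.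
rewrite e ler_pdivlMr //.
have h1 : (1 - g) * C <= (1 - g) * Sth by apply: ler_wpM2l => //; rewrite subr_ge0.
have h2 : (1 - g) * b * Sth <= 2 * bt * g * n * Sth by apply: ler_wpM2r => //; lra.
have h3 : (1 - g) * C * b <= (1 - g) * Sth * b by apply: ler_wpM2r => //; exact: ltW.
lra.
Qed.
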